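(* Let $\pi\in\mathfrak{S}_n$ avoid $231$. If $(a,b)$ and $(c,d)$ are $2$-cycles in the disjoint cycle decomposition of $\pi$ with $a<b$, $c<d$ and $a<c$, then either $b<c$ or $b>d$.
   Context: A permutation avoids $231$ if there are no indices $i<j<k$ with $\pi_k<\pi_i<\pi_j$. *)

(* Defs.v *)
From mathcomp Require Import all_boot all_fingroup.
Set Implicit Arguments. Unset Strict Implicit. Unset Printing Implicit Defensive.

(* A permutation s of 'I_n (the indices 0..n-1 stand for 1..n) avoids 231 if
   there are no indices i < j < k with s k < s i < s j. *)
Definition avoids231 (n : nat) (s : 'S_n) : Prop :=
  forall i j k : 'I_n, i < j -> j < k -> ~ (s k < s i < s j).

(* Main.v *)
Require Import Defs.
From mathcomp Require Import all_boot all_fingroup.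

Theorem lemma3p2 (n : nat) (s : 'S_n) (a b c d : 'I_n) :
  avoids231 s ->
  s a = b -> s b = a -> s c = d -> s d = c ->
  a < b -> c < d -> a < c ->
  b < c \/ d < b.
Proof.
move=> av sa sb sc sd ab cd ac.
case: (ltnP b c) => [bc0|cb]; first by left.
right.
have bc : b != c.
  apply/eqP=> E; move: sb; rewrite E sc => E2.
  by move: (ltn_trans ac cd); rewrite E2 ltnn.
have bd : b != d.
  apply/eqP=> E; move: sb; rewrite E sd => E2.
  by move: ac; rewrite E2 ltnn.
have cb' : c < b by rewrite ltn_neqAle eq_sym bc cb.
case: (ltnP d b) => // db.
have bd' : b < d by rewrite ltn_neqAle bd db.
exfalso; apply: (av a c b ac cb').
by rewrite sb sa sc ab bd'.
Qed.
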